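(* A commutative Bezout domain $R$ is a commutative elementary divisor domain if and only if for all $a_1,a_2,b_1,b_2\in R$ with $(a_1,a_2)=(b_1,b_2)=1$ there exists $r\in R$ such that $b_1+rb_2=\alpha\beta$ for some $\alpha,\beta\in R$ with $(\alpha,\beta)=(a_1,\alpha)=(a_2,\beta)=1$.
   Context: A commutative Bezout domain is a commutative integral domain with $1\ne0$ in which every finitely generated ideal is principal; $(\cdot,\cdot)$ denotes a greatest common divisor. $R$ is an elementary divisor ring if every matrix $A$ over $R$ admits invertible $P,Q$ with $PAQ$ a diagonal matrix $\mathrm{diag}(d_1,\dots,d_r,0,\dots,0)$ with $d_i\mid d_{i+1}$. *)

(* Defs.v *)
From HB Require Import structures.
From mathcomp Require Import all_boot all_order all_algebra.
Set Implicit Arguments. Unset Strict Implicit. Unset Printing Implicit Defensive.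
Import Order.TTheory GRing.Theory Num.Theory.
Local Open Scope ring_scope.

Definition rdvd (R : comNzRingType) (a b : R) : Prop := exists c : R, b = c * a.

Definition rcoprime (R : comUnitRingType) (a b : R) : Prop :=
  forall d : R, rdvd d a -> rdvd d b -> d \is a GRing.unit.

Definition in_fg_ideal (R : comNzRingType) (s : seq R) (x : R) : Prop :=
  exists cs : seq R, size cs = size s /\
    x = \sum_(i < size s) cs`_i * s`_i.

Definition bezout_domain (R : idomainType) : Prop :=
  forall s : seq R, exists d : R, forall x : R, in_fg_ideal s x <-> rdvd d x.

(* D is of the form diag(d_1, ..., d_k) (rectangular) with d_i | d_(i+1);
   the chain condition forces the shape diag(d_1,..,d_r,0,..,0). *)
Definition smith_diag (R : comNzRingType) (m n : nat) (D : 'M[R]_(m, n)) : Prop :=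
  (forall (i : 'I_m) (j : 'I_n), (i : nat) <> j -> D i j = 0) /\
  (forall (i i' : 'I_m) (j j' : 'I_n),
      (i : nat) = j -> (i' : nat) = j' -> (i' : nat) = i.+1 ->
      rdvd (D i j) (D i' j')).

Definition elementary_divisor_ring (R : comUnitRingType) : Prop :=
  forall (m n : nat) (A : 'M[R]_(m, n)),
    exists (P : 'M[R]_m) (Q : 'M[R]_n),
      P \in unitmx /\ Q \in unitmx /\ smith_diag (P *m A *m Q).

(* Main.v *)
Require Import Defs.
From HB Require Import structures.
From mathcomp Require Import all_boot all_order all_algebra.
Import GRing.Theory.
Local Open Scope ring_scope.
From mathcomp Require Import ring zify.
Set Implicit Arguments. Unset Strict Implicit. Unset Printing Implicit Defensive.

Section Basics.
Variable R : idomainType.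
Hypothesis hB : bezout_domain R.

Definition cop (a b : R) := exists u v : R, u * a + v * b = 1.

Lemma dvd_unit (d : R) : rdvd d 1 -> d \is a GRing.unit.
Proof. by case=> c h; apply/unitrPr; exists c; rewrite mulrC -h. Qed.

Lemma bez2 (a b : R) : exists g u v, rdvd g a /\ rdvd g b /\ g = u * a + v * b.
Proof.
have [d hd] := hB [:: a; b].
have h1 : in_fg_ideal [:: a; b] d by apply/hd; exists 1; rewrite mul1r.
case: h1 => cs [hs hds].
exists d, cs`_0, cs`_1.
split; last split.
- apply/hd; exists [:: 1; 0]; split => //.
  by rewrite /= !big_ord_recl big_ord0 /=; ring.
- apply/hd; exists [:: 0; 1]; split => //.
  by rewrite /= !big_ord_recl big_ord0 /=; ring.
- by rewrite hds /= !big_ord_recl big_ord0 /=; ring.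
Qed.

Lemma rcopP (a b : R) : rcoprime a b <-> cop a b.
Proof.
split.
- move=> h; have [g [u [v [ga [gb eg]]]]] := bez2 a b.
  have /unitrP [y [hy _]] := h _ ga gb.
  by exists (y * u), (y * v); rewrite -hy eg; ring.
- case=> u [v huv] d [c1 ea] [c2 eb]; apply: dvd_unit.
  by exists (u * c1 + v * c2); rewrite -huv ea eb; ring.
Qed.

Lemma gcd_decomp (b c : R) : exists d b' c', b = d * b' /\ c = d * c' /\ cop b' c'.
Proof.
have [g [u [v [[k1 e1] [[k2 e2] eg]]]]] := bez2 b c.
have [g0|gn0] := eqVneq g 0.
  exists 0, 1, 0; rewrite e1 e2 g0 !mulr0 !mul0r; split=> //; split=> //.
  by exists 1, 0; ring.
exists g, k1, k2; rewrite e1 e2 ![g * _]mulrC; split=> //; split=> //.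
exists u, v; apply: (mulIf gn0); rewrite mul1r [RHS]eg e1 e2; ring.
Qed.

Definition KC := forall a b c : R, (exists x y z, x * a + y * b + z * c = 1) ->
  exists p q u v : R, u * (p * a) + v * (p * b + q * c) = 1.

Definition ZC := forall a1 a2 b1 b2 : R, rcoprime a1 a2 -> rcoprime b1 b2 ->
     exists r : R, exists alpha beta : R,
       b1 + r * b2 = alpha * beta /\
       rcoprime alpha beta /\ rcoprime a1 alpha /\ rcoprime a2 beta.

Lemma KC_ZC : KC -> ZC.
Proof.
move=> hK a1 a2 b1 b2 H1 H2; have [s [t hst]] := proj1 (rcopP _ _) H1; have [s' [t' hst']] := proj1 (rcopP _ _) H2.
have [p [q [u [v hp]]]] : exists p q u v : R, u * (p * a1) + v * (p * (a2 * b1) + q * (a2 * b2)) = 1.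
  apply: hK; exists s, (t * s'), (t * t'); rewrite -hst -[in RHS](mulr1 (t * a2)) -hst'; ring.
pose m := p * b1 + q * b2.
pose e1 := u * a1 + v * a2 * b1; pose f1 := v * a2 * q.
pose p' := e1 * (p * u * a1 + v * a2 * m) + f1 * b2 * u * a1.
pose k := f1 * v.
have hk : p * p' + k * (b2 * a2 * m) = 1.
  have h1 : p * e1 + f1 * b2 = 1 by rewrite -hp /e1 /f1; ring.
  have h2 : p * (u * a1) + v * (a2 * m) = 1 by rewrite -hp /m; ring.
  by rewrite -[RHS](mulr1 1) -{1}h1 -h2 /p' /k; ring.
exists (p' * q - k * a2 * m * b1), m, p'.
split; [|split; [|split]]; try apply/rcopP.
- transitivity ((p * p' + k * (b2 * a2 * m)) * b1 + (p' * q - k * a2 * m * b1) * b2).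
    by rewrite hk mul1r.
  rewrite /m; ring.
- by exists (k * b2 * a2), p; rewrite -hk; ring.
- by exists (u * p), (v * a2); rewrite -hp /m; ring.
- by exists (k * b2 * m), p; rewrite -hk; ring.
Qed.

Lemma cop_mul (x y z : R) : cop x z -> cop y z -> cop (x * y) z.
Proof.
case=> u [v h1] [u' [v' h2]]; exists (u * u'), (u * x * v' + v * u' * y + v * v' * z).
by rewrite -[RHS](mulr1 1) -{1}h1 -h2; ring.
Qed.

Lemma ZC_KC : ZC -> KC.
Proof.
move=> hZ a b c [x [y [z hxyz]]].
have [d [b' [c' [eb [ec [s [t hst]]]]]]] := gcd_decomp b c.
have had : cop a d by exists x, (y * b' + z * c'); rewrite -hxyz eb ec; ring.
have [r [al [be [hr [/rcopP hab [/rcopP haa /rcopP hdb]]]]]] :=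
  hZ a d b' c' (proj2 (rcopP _ _) had) (proj2 (rcopP _ _) (ex_intro _ s (ex_intro _ t hst))).
have hbc' : cop be c'.
  by exists (s * al), (t - s * r); rewrite -hst -[X in _ = s * X + _](addrK (r * c') b') hr; ring.
have copC (x0 y0 : R) : cop x0 y0 -> cop y0 x0.
  by case=> u0 [v0 h]; exists v0, u0; rewrite -h; ring.
case: hbc' => u1 [v1 e1]; case: (copC _ _ hab) => u2 [v2 e2]; case: (copC _ _ hdb) => u3 [v3 e3].
pose X := u2 * be + v2 * al; pose Y := u3 * be + v3 * d.
pose p := u1 * X * Y + v1 * c' * u2 * Y + v1 * c' * v2 * al * u3.
pose w := v1 * v2 * v3.
have hp : p * be + w * (c' * al * d) = 1.
  transitivity ((u1*be+v1*c')*(u2*be+v2*al)*(u3*be+v3*d)); last by rewrite e1 e2 e3 !mulr1.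
  rewrite /p /w /X /Y; ring.
pose q := w * al * al * d + p * r.
have hq : p * b + q * c = d * al.
  have hb' : b' = al * be - r * c' by rewrite -hr; ring.
  rewrite eb ec hb' /q; transitivity (d * al * (p * be + w * (c' * al * d))); first by ring.
  by rewrite hp mulr1.
have h1 : cop p (d * al) by exists be, (w * c'); rewrite -hp; ring.
have h2 : cop a (d * al) by apply copC; apply: cop_mul; apply copC.
have [u [v huv]] := cop_mul h1 h2.
by exists p, q, u, v; rewrite hq.
Qed.

Lemma ZC_iff_KC : ZC <-> KC.
Proof. by split; [apply: ZC_KC | apply: KC_ZC]. Qed.
End Basics.


Section Mx.
Variable R : idomainType.
Hypothesis hB : bezout_domain R.

Definition spanM m n (M : 'M[R]_(m,n)) (x : R) :=
  exists C : 'M[R]_(m,n), x = \sum_i \sum_j C i j * M i j.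
Definition prim m n (M : 'M[R]_(m,n)) := spanM M 1.
Definition corner_ok m n (M : 'M[R]_(m.+1,n.+1)) := exists P Q,
  P \in unitmx /\ Q \in unitmx /\ (P *m M *m Q) 0 0 \is a GRing.unit.

Lemma spanM0 m n (M : 'M[R]_(m,n)) : spanM M 0.
Proof. by exists 0; rewrite big1 // => i _; rewrite big1 // => j _; rewrite mxE mul0r. Qed.

Lemma spanMD m n (M : 'M[R]_(m,n)) x y : spanM M x -> spanM M y -> spanM M (x + y).
Proof.
case=> C1 -> [C2 ->]; exists (C1 + C2); rewrite -big_split; apply: eq_bigr => i _.
by rewrite -big_split; apply: eq_bigr => j _; rewrite mxE mulrDl.
Qed.

Lemma spanMZ m n (M : 'M[R]_(m,n)) c x : spanM M x -> spanM M (c * x).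
Proof.
case=> C ->; exists (c *: C); rewrite mulr_sumr; apply: eq_bigr => i _.
by rewrite mulr_sumr; apply: eq_bigr => j _; rewrite mxE mulrA.
Qed.

Lemma spanM_sum m n (M : 'M[R]_(m,n)) (I : Type) (r : seq I) (P : pred I) F :
  (forall i, P i -> spanM M (F i)) -> spanM M (\sum_(i <- r | P i) F i).
Proof.
move=> h; apply: (big_ind (spanM M)) => //; [exact: spanM0 | exact: spanMD].
Qed.

Lemma spanM_entry m n (M : 'M[R]_(m,n)) i j : spanM M (M i j).
Proof.
exists (delta_mx i j); rewrite (bigD1 i) //= (bigD1 j) //= mxE !eqxx mul1r.
rewrite big1 ?addr0; last by move=> j' /negPf hj; rewrite mxE eqxx hj mul0r.
rewrite big1 ?addr0 // => i' /negPf hi; rewrite big1 // => j' _.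
by rewrite mxE hi mul0r.
Qed.

Lemma spanM_trans m n p q (M : 'M[R]_(m,n)) (N : 'M[R]_(p,q)) x :
  (forall i j, spanM M (N i j)) -> spanM N x -> spanM M x.
Proof.
move=> h [C ->]; apply: spanM_sum => i _; apply: spanM_sum => j _.
exact: spanMZ.
Qed.

Lemma spanM_mul m n p q (P : 'M[R]_(p,m)) (M : 'M[R]_(m,n)) (Q : 'M[R]_(n,q)) i j :
  spanM M ((P *m M *m Q) i j).
Proof.
rewrite mxE; apply: spanM_sum => l _; rewrite mxE mulr_suml.
apply: spanM_sum => k _; rewrite mulrAC; apply: spanMZ; exact: spanM_entry.
Qed.

Lemma rdvd0 (g : R) : rdvd g 0. Proof. by exists 0; rewrite mul0r. Qed.
Lemma rdvdD (g x y : R) : rdvd g x -> rdvd g y -> rdvd g (x + y).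
Proof. by case=> a -> [b ->]; exists (a + b); rewrite mulrDl. Qed.
Lemma rdvdM (g x c : R) : rdvd g x -> rdvd g (c * x).
Proof. by case=> a ->; exists (c * a); rewrite mulrA. Qed.

Lemma spanM_dvd m n (M : 'M[R]_(m,n)) g x :
  (forall i j, rdvd g (M i j)) -> spanM M x -> rdvd g x.
Proof.
move=> h [C ->]; apply: (big_ind (rdvd g)); [exact: rdvd0|exact: rdvdD|] => i _.
apply: (big_ind (rdvd g)); [exact: rdvd0|exact: rdvdD|] => j _; exact: rdvdM.
Qed.

Lemma gcd_seq (I : eqType) (f : I -> R) (r : seq I) : uniq r ->
  exists g (c : I -> R), g = \sum_(i <- r) c i * f i /\
    forall i, i \in r -> rdvd g (f i).
Proof.
elim: r => [_|i r IH /= /andP [ni ur]].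
  by exists 0, (fun _ => 0); rewrite big_nil.
have [g [c [eg hg]]] := IH ur.
have [h [u [v [hi [hgg eh]]]]] := bez2 hB (f i) g.
exists h, (fun j => if j == i then u else v * c j); split.
  rewrite big_cons eqxx eh eg mulr_sumr; congr (_ + _).
  apply: eq_big_seq => j jr.
  have -> : (j == i) = false by apply/negP => /eqP ji; move: ni; rewrite -ji jr.
  by rewrite mulrA.
move=> j; rewrite inE => /orP [/eqP -> //|jr].
case: hgg => k ek; case: (hg j jr) => k' ->; rewrite ek; exists (k' * k); by rewrite mulrA.
Qed.

Lemma gcdM m n (M : 'M[R]_(m,n)) : exists g, spanM M g /\ forall i j, rdvd g (M i j).
Proof.
have [g [c [eg hg]]] := gcd_seq (fun ij : 'I_m * 'I_n => M ij.1 ij.2) (index_enum_uniq _).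
exists g; split; last by move=> i j; apply: (hg (i, j)); rewrite mem_index_enum.
exists (\matrix_(i, j) c (i, j)); rewrite eg pair_bigA /=.
by apply: eq_bigr => [[i j]] _; rewrite mxE.
Qed.
End Mx.


Section Mx2.
Variable R : idomainType.
Hypothesis hB : bezout_domain R.

Lemma o20 : ord0 = 0 :> 'I_2. Proof. exact: val_inj. Qed.
Lemma o21 : lift ord0 ord0 = 1 :> 'I_2. Proof. exact: val_inj. Qed.
Lemma o10 : ord0 = 0 :> 'I_1. Proof. exact: val_inj. Qed.

Definition mx22 (a b c d : R) : 'M[R]_2 :=
  \matrix_(i < 2, j < 2) if (i : nat) == 0%N then (if (j : nat) == 0%N then a else b)
                         else (if (j : nat) == 0%N then c else d).

Lemma mul2E m n (X : 'M[R]_(m, 2)) (Y : 'M[R]_(2, n)) i j :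
  (X *m Y) i j = X i 0 * Y 0 j + X i 1 * Y 1 j.
Proof.
rewrite mxE !big_ord_recl big_ord0 addr0.
by have -> : lift ord0 ord0 = 1 :> 'I_2 by apply: val_inj.
Qed.

Lemma det2 (A : 'M[R]_2) : \det A = A 0 0 * A 1 1 - A 0 1 * A 1 0.
Proof.
rewrite (expand_det_row _ 0) !big_ord_recl big_ord0 addr0 /cofactor !det_mx11 !mxE /=.
have e1 : lift 0 0 = 1 :> 'I_2 by apply: val_inj.
have e2 : lift ord0 (0:'I_1) = 1 :> 'I_2 by apply: val_inj.
have e3 : lift (lift ord0 ord0) (0 : 'I_1) = 0 :> 'I_2 by apply: val_inj.
have e4 : lift ord0 ord0 = 1 :> 'I_2 by apply: val_inj.
have e5 : ord0 = 0 :> 'I_2 by apply: val_inj.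
have e6 : lift 1 (0 : 'I_1) = 0 :> 'I_2 by apply: val_inj.
rewrite ?e1 ?e2 ?e3 ?e4 ?e5 e6 /bump /= expr0 expr1; ring.
Qed.

Lemma det22 a b c d : \det (mx22 a b c d) = a * d - b * c.
Proof. by rewrite det2 !mxE. Qed.

Lemma unitmx22 a b c d : a * d - b * c = 1 -> mx22 a b c d \in unitmx.
Proof. by move=> h; rewrite unitmxE det22 h unitr1. Qed.

Lemma prim_equiv m n (P : 'M[R]_m) (Q : 'M[R]_n) (A : 'M[R]_(m, n)) :
  P \in unitmx -> Q \in unitmx -> prim A -> prim (P *m A *m Q).
Proof.
move=> uP uQ; apply: spanM_trans => i j.
have e : invmx P *m (P *m A *m Q) *m invmx Q = A.
  by rewrite !mulmxA mulmxK // mulVmx // mul1mx.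
by have := spanM_mul (invmx P) (P *m A *m Q) (invmx Q) i j; rewrite e.
Qed.

Lemma prim_tr m n (A : 'M[R]_(m, n)) : prim A -> prim A^T.
Proof.
case=> C e; exists C^T; rewrite e exchange_big; apply: eq_bigr => i _.
by apply: eq_bigr => j _; rewrite !mxE.
Qed.

Lemma corner_tr m n (A : 'M[R]_(m.+1, n.+1)) : corner_ok A^T -> corner_ok A.
Proof.
case=> P [Q [uP [uQ h]]]; exists Q^T, P^T; rewrite !unitmx_tr; do 2!split => //.
by rewrite -[A]trmxK -!trmx_mul mulmxA mxE.
Qed.

Lemma corner11 (A : 'M[R]_1) : prim A -> corner_ok A.
Proof.
case=> C; rewrite !big_ord1 => e; exists 1%:M, 1%:M; rewrite unitmx1; do 2!split => //.
by rewrite mul1mx mulmx1; apply/unitrPr; exists (C 0 0); rewrite mulrC e.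
Qed.

Lemma corner21 (A : 'M[R]_(2, 1)) : prim A -> corner_ok A.
Proof.
case=> C; rewrite !big_ord_recl !big_ord0 !addr0 ?o20 ?o21 ?o10 => e.
exists (mx22 (C 0 0) (C 1 0) (- A 1 0) (A 0 0)), 1%:M; rewrite unitmx1.
split; first by apply: unitmx22; rewrite e; ring.
split => //; rewrite mulmx1 mul2E !mxE /=.
by rewrite -e unitr1.
Qed.
End Mx2.

Section Mx22.
Variable R : idomainType.
Hypothesis hB : bezout_domain R.
Hypothesis hK : KC R.

Lemma corner22 (A : 'M[R]_2) : prim A -> corner_ok A.
Proof.
move=> pA.
have [g [a' [e' [ea [ee [s [t hst]]]]]]] := gcd_decomp hB (A 0 0) (A 1 0).
pose M1 := mx22 s t (- e') a'.
have uM1 : M1 \in unitmx by apply: unitmx22; rewrite -hst; ring.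
have [T eT] : exists T, T = M1 *m A by eexists.
have pT : prim T by rewrite eT -[M1 *m A]mulmx1; apply: prim_equiv => //; exact: unitmx1.
have hT00 : T 0 0 = g by rewrite eT mul2E !mxE /= ea ee -[RHS]mulr1 -hst; ring.
have hT10 : T 1 0 = 0 by rewrite eT mul2E !mxE /= ea ee; ring.
case: pT => C; rewrite !big_ord_recl !big_ord0 !addr0 ?o20 ?o21 hT00 hT10 => eC.
have h3 : C 0 0 * g + C 0 1 * T 0 1 + C 1 1 * T 1 1 = 1 by rewrite eC; ring.
have [p [q [u [v huv]]]] := hK (ex_intro _ _ (ex_intro _ _ (ex_intro _ _ h3))).
exists (mx22 p q (- (v * T 1 1)) (u * g + v * T 0 1) *m M1).
exists (mx22 u (- (p * T 0 1 + q * T 1 1)) v (p * g)).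
rewrite unitmx_mul uM1 andbT.
split; first by apply: unitmx22; rewrite -huv; ring.
split; first by apply: unitmx22; rewrite -huv; ring.
rewrite -(mulmxA _ M1) -eT mul2E !mul2E !mxE /= hT00 hT10.
by apply/unitrPr; exists 1; rewrite mulr1 -huv; ring.
Qed.
End Mx22.


Section RowRed.
Variable R : idomainType.
Hypothesis hB : bezout_domain R.

Lemma rowred n : (forall A : 'M[R]_(2, n.+1), prim A -> corner_ok A) ->
  forall m (A : 'M[R]_(m.+2, n.+1)), prim A -> corner_ok A.
Proof.
move=> hb; elim=> [|m IH] A pA; first exact: hb.
have [a1 [B eA]] : exists a1 B, A = col_mx a1 B :> 'M_(1 + m.+2, n.+1).
  by exists (usubmx (A : 'M_(1 + m.+2, n.+1))), (dsubmx (A : 'M_(1 + m.+2, n.+1))); rewrite vsubmxK.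
have hu (i : 'I_1) j : A (lshift m.+2 i) j = a1 i j by rewrite eA; exact: (col_mxEu a1 B).
have hd (i : 'I_m.+2) j : A (rshift 1 i) j = B i j by rewrite eA; exact: (col_mxEd a1 B).
have [g [sg dg]] := gcdM hB B.
have [c1 [w e1]] : exists (c1 : 'M_(1, n.+1)) w, 1 = \sum_j c1 0 j * a1 0 j + w * g.
  case: pA => C eC.
  change (1 = \sum_(i < 1 + m.+2) \sum_j C i j * A i j) in eC.
  rewrite big_split_ord /= big_ord1 in eC.
  have : rdvd g (\sum_(i < m.+2) \sum_j C (rshift 1 i) j * A (rshift 1 i) j).
    apply: (spanM_dvd dg); exists (\matrix_(i, j) C (rshift 1 i) j).
    by apply: eq_bigr => i _; apply: eq_bigr => j _; rewrite hd mxE.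
  case=> w ew; exists (\row_j C (lshift m.+2 (ord0 : 'I_1)) j), w; rewrite -ew eC.
  by congr (_ + _); apply: eq_bigr => j _; rewrite hu mxE.
have [P' [Q' [u [uP' [uQ' [uu eu]]]]]] : exists P' Q' u, P' \in unitmx /\ Q' \in unitmx /\
    u \is a GRing.unit /\ (P' *m B *m Q') 0 0 = g * u.
  have [g0|gn0] := eqVneq g 0.
    exists 1%:M, 1%:M, 1; split; first exact: unitmx1.
    split; first exact: unitmx1. split; first exact: unitr1.
    rewrite mul1mx mulmx1 g0 mulr1.
    by case: (dg 0 0) => k ->; rewrite g0 mulr0.
  have [f hf] := fin_all_exists (fun ij : 'I_m.+2 * 'I_n.+1 => dg ij.1 ij.2).
  pose B' := \matrix_(i, j) f (i, j).
  have eB : B = g *: B' by apply/matrixP => i j; rewrite !mxE; have := hf (i, j); rewrite /= => ->; rewrite mulrC.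
  have pB' : prim B'.
    case: sg => C eC; exists C; apply: (mulIf gn0); rewrite mul1r [LHS]eC mulr_suml.
    apply: eq_bigr => i _; rewrite mulr_suml; apply: eq_bigr => j _.
    by rewrite eB mxE; ring.
  have [P' [Q' [uP' [uQ' hu']]]] := IH B' pB'.
  exists P', Q', ((P' *m B' *m Q') 0 0); do 3!split => //.
  by rewrite eB -scalemxAr -scalemxAl mxE.
pose blk1 : 'M_(1 + m.+2) := block_mx 1%:M 0 0 P'.
have ublk1 : blk1 \in unitmx by rewrite unitmxE det_ublock det1 mul1r -unitmxE.
have [X eX] : exists X : 'M_(m.+3, n.+1), X = blk1 *m A *m Q' by eexists.
have hXc : X = col_mx (a1 *m Q') (P' *m B *m Q') :> 'M_(1 + m.+2, n.+1).
  by rewrite eX eA mul_block_col mul1mx !mul0mx addr0 add0r mul_col_mx.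
have [S [D eXS]] : exists S D, X = col_mx S D :> 'M_(2 + m.+1, n.+1).
  by exists (usubmx (X : 'M_(2 + m.+1, n.+1))), (dsubmx (X : 'M_(2 + m.+1, n.+1))); rewrite vsubmxK.
have hS0 j : S 0 j = (a1 *m Q') 0 j.
  have -> : (a1 *m Q') 0 j = X (lshift m.+2 (0 : 'I_1)) j by rewrite hXc; exact: esym (col_mxEu _ _ _ _).
  have -> : lshift m.+2 (0 : 'I_1) = lshift m.+1 (0 : 'I_2) :> 'I_m.+3 by apply: val_inj.
  by rewrite eXS; exact: esym (col_mxEu _ _ _ _).
have hS1 : S 1 0 = g * u.
  have -> : g * u = X (rshift 1 (0 : 'I_m.+2)) 0 by rewrite -eu hXc; exact: esym (col_mxEd _ _ _ _).
  have -> : rshift 1 (0 : 'I_m.+2) = lshift m.+1 (1 : 'I_2) :> 'I_m.+3 by apply: val_inj.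
  by rewrite eXS; exact: esym (col_mxEu _ _ _ _).
have pS : prim S.
  rewrite /prim e1; apply: spanMD.
    apply: spanM_sum => j _; apply: spanMZ; apply: (@spanM_trans _ _ _ _ _ _ (a1 *m Q')).
      by move=> i' j'; rewrite (ord1 i') -hS0; exact: spanM_entry.
    by have := spanM_mul 1%:M (a1 *m Q') (invmx Q') 0 j; rewrite mul1mx mulmxK.
  apply: spanMZ; have -> : g = u^-1 * S 1 0 by rewrite hS1 mulrCA mulVr // mulr1.
  apply: spanMZ; exact: spanM_entry.
have [P2 [Q2 [uP2 [uQ2 h2]]]] := hb S pS.
pose blk2 : 'M_(2 + m.+1) := block_mx P2 0 0 1%:M.
have ublk2 : blk2 \in unitmx by rewrite unitmxE det_ublock det1 mulr1 -unitmxE.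
exists (blk2 *m blk1), (Q' *m Q2); rewrite !unitmx_mul ublk1 ublk2 uQ' uQ2.
do 2!split => //.
have -> : blk2 *m blk1 *m A *m (Q' *m Q2) = blk2 *m X *m Q2 by rewrite eX !mulmxA.
have -> : (0 : 'I_m.+3) = lshift m.+1 (0 : 'I_2) by apply: val_inj.
rewrite eXS /blk2 mul_block_col !mul0mx addr0 mul_col_mx.
by rewrite (col_mxEu (P2 *m S *m Q2)).
Qed.
End RowRed.


Section Final.
Variable R : idomainType.
Hypothesis hB : bezout_domain R.
Hypothesis hK : KC R.

Lemma col1 m (A : 'M[R]_(m.+1, 1)) : prim A -> corner_ok A.
Proof. case: m A => [|m] A; [exact: corner11 | exact: (rowred hB (@corner21 _))]. Qed.

Lemma row1 n (A : 'M[R]_(1, n.+1)) : prim A -> corner_ok A.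
Proof. by move=> pA; apply: corner_tr; apply: col1; apply: prim_tr. Qed.

Lemma col2 m (A : 'M[R]_(m.+1, 2)) : prim A -> corner_ok A.
Proof. case: m A => [|m] A; [exact: row1 | exact: (rowred hB (corner22 hB hK))]. Qed.

Lemma row2 n (A : 'M[R]_(2, n.+1)) : prim A -> corner_ok A.
Proof. by move=> pA; apply: corner_tr; apply: col2; apply: prim_tr. Qed.

Lemma corner_all m n (A : 'M[R]_(m.+1, n.+1)) : prim A -> corner_ok A.
Proof. case: m A => [|m] A; [exact: row1 | exact: (rowred hB (@row2 n))]. Qed.
End Final.


Section Clear.
Variable R : idomainType.
Hypothesis hB : bezout_domain R.
Hypothesis hK : KC R.

Lemma clear_lemma m n (u : R) (w : 'M[R]_(1, n)) (v : 'M[R]_(m, 1)) (W : 'M[R]_(m, n)) :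
  u \is a GRing.unit ->
  block_mx 1%:M 0 (- (u^-1 *: v)) 1%:M *m block_mx u%:M w v W *m
    block_mx 1%:M (- (u^-1 *: w)) 0 1%:M = block_mx u%:M 0 0 (W - u^-1 *: (v *m w)).
Proof.
move=> uu; rewrite !mulmx_block !mul1mx !mul0mx !mulmx1 !mulmx0 ?addr0 ?add0r.
rewrite mul_scalar_mx mul_mx_scalar !scalerN !scalerA mulrV // scale1r !addNr.
by rewrite scale1r addNr mul0mx add0r mulNmx -scalemxAl addrC.
Qed.


Lemma corner_clear m n (A : 'M[R]_(1 + m, 1 + n)) : exists (P : 'M_(1 + m)) (Q : 'M_(1 + n)) d B,
  P \in unitmx /\ Q \in unitmx /\ P *m A *m Q = block_mx d%:M 0 0 B /\ forall i j, rdvd d (B i j).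
Proof.
have [g [sg dg]] := gcdM hB A.
have [g0|gn0] := eqVneq g 0.
  have A0 : A = 0 by apply/matrixP => i j; case: (dg i j) => k ->; rewrite g0 mulr0 mxE.
  exists 1%:M, 1%:M, 0, 0; rewrite !unitmx1 A0 mulmx0 mul0mx raddf0 block_mx0.
  by split => //; split => //; split => // i j; rewrite mxE; exact: rdvd0.
have [f hf] := fin_all_exists (fun ij : 'I_(1 + m) * 'I_(1 + n) => dg ij.1 ij.2).
pose A' := \matrix_(i, j) f (i, j).
have eA : A = g *: A'.
  by apply/matrixP => i j; rewrite !mxE; have := hf (i, j); rewrite /= => ->; rewrite mulrC.
have pA' : prim A'.
  case: sg => C eC; exists C; apply: (mulIf gn0); rewrite mul1r [LHS]eC mulr_suml.
  apply: eq_bigr => i _; rewrite mulr_suml; apply: eq_bigr => j _.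
  by rewrite eA mxE; ring.
have [P [Q [uP [uQ hu]]]] := corner_all hB hK pA'.
have [C eC] : exists C : 'M_(1 + m, 1 + n), C = P *m A' *m Q by eexists.
have [c0 [w [v [W eCb]]]] : exists c0 w v W, C = block_mx c0 w v W.
  by exists (ulsubmx C), (ursubmx C), (dlsubmx C), (drsubmx C); rewrite submxK.
have hc0 : c0 = (C 0 0)%:M.
  apply/matrixP => i j; rewrite (ord1 i) (ord1 j) [in RHS]mxE eqxx mulr1n.
  have -> : (0 : 'I_(1 + m)) = lshift m 0 by apply: val_inj.
  have -> : (0 : 'I_(1 + n)) = lshift n 0 by apply: val_inj.
  by rewrite eCb block_mxEul.
have uu : C 0 0 \is a GRing.unit by rewrite eC.
move: hc0 uu eCb; set u := C 0 0 => hc0 uu eCb.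
pose L : 'M_(1 + m) := block_mx 1%:M 0 (- (u^-1 *: v)) 1%:M.
pose Rm : 'M_(1 + n) := block_mx 1%:M (- (u^-1 *: w)) 0 1%:M.
exists (L *m P), (Q *m Rm), (g * u), (g *: (W - u^-1 *: (v *m w))).
split; first by rewrite unitmx_mul uP andbT unitmxE det_lblock !det1 mulr1 unitr1.
split; first by rewrite unitmx_mul uQ unitmxE det_ublock !det1 mulr1 unitr1.
split.
  have -> : L *m P *m A *m (Q *m Rm) = g *: (L *m C *m Rm).
    by rewrite eC eA !mulmxA -scalemxAr -!scalemxAl.
  by rewrite eCb hc0 clear_lemma // scale_block_mx scale_scalar_mx !scaler0.
move=> i j; exists ((W - u^-1 *: (v *m w)) i j * u^-1).
by rewrite mxE -[g in LHS]mulr1 -(mulVr uu); ring.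
Qed.
End Clear.


Section EDR.
Variable R : idomainType.
Hypothesis hB : bezout_domain R.
Hypothesis hK : KC R.

Lemma smith_block m n d (D : 'M[R]_(m, n)) : smith_diag D -> (forall i j, rdvd d (D i j)) ->
  smith_diag (block_mx d%:M 0 0 D : 'M_(1 + m, 1 + n)).
Proof.
case=> hD0 hD1 hd; split.
  move=> i j; rewrite -(splitK i) -(splitK j).
  case: (split i) => [i0|i0]; case: (split j) => [j0|j0] /= hij.
  - by case: hij; rewrite (ord1 i0) (ord1 j0).
  - by rewrite block_mxEur mxE.
  - by rewrite block_mxEdl mxE.
  - have -> : (block_mx d%:M 0 0 D : 'M_(1 + m, 1 + n)) (rshift 1 i0) (rshift 1 j0) = D i0 j0.
      exact: block_mxEdr.
    by apply: hD0 => e; apply: hij; rewrite e.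
move=> i i' j j'; rewrite -(splitK i) -(splitK j) -(splitK i') -(splitK j').
case: (split i) => [i0|i0]; case: (split j) => [j0|j0];
  case: (split i') => [i1|i1]; case: (split j') => [j1|j1] /= e1 e2 e3;
  have b1 := ltn_ord i0; have b2 := ltn_ord j0; have b3 := ltn_ord i1; have b4 := ltn_ord j1; try lia.
- have -> : (block_mx d%:M 0 0 D : 'M_(1 + m, 1 + n)) (rshift 1 i1) (rshift 1 j1) = D i1 j1.
    exact: block_mxEdr.
  have -> : (block_mx d%:M 0 0 D : 'M_(1 + m, 1 + n)) (lshift m i0) (lshift n j0) = (d%:M : 'M_1) i0 j0.
    exact: block_mxEul.
  by rewrite (ord1 i0) (ord1 j0) mxE eqxx mulr1n.
- have -> : (block_mx d%:M 0 0 D : 'M_(1 + m, 1 + n)) (rshift 1 i1) (rshift 1 j1) = D i1 j1.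
    exact: block_mxEdr.
  have -> : (block_mx d%:M 0 0 D : 'M_(1 + m, 1 + n)) (rshift 1 i0) (rshift 1 j0) = D i0 j0.
    exact: block_mxEdr.
  apply: hD1; lia.
Qed.

Lemma edr_of_KC : elementary_divisor_ring R.
Proof.
move=> m; elim: m => [|m IH] n A.
  by exists 1%:M, 1%:M; rewrite !unitmx1; split=> //; split => //; split => [[]|[]].
case: n A => [|n] A.
  by exists 1%:M, 1%:M; rewrite !unitmx1; split=> //; split => //; split => [i []|i i' []].
have [P [Q [d [B [uP [uQ [eA hd]]]]]]] := corner_clear hB hK (A : 'M_(1 + m, 1 + n)).
have [P' [Q' [uP' [uQ' sD]]]] := IH n B.
exists (block_mx 1%:M 0 0 P' *m P : 'M_(1 + m)), (Q *m block_mx 1%:M 0 0 Q' : 'M_(1 + n)).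
have ub1 : (block_mx 1%:M 0 0 P' : 'M_(1 + m)) \in unitmx.
  by rewrite unitmxE det_ublock det1 mul1r -unitmxE.
have ub2 : (block_mx 1%:M 0 0 Q' : 'M_(1 + n)) \in unitmx.
  by rewrite unitmxE det_ublock det1 mul1r -unitmxE.
split; first by rewrite unitmx_mul uP ub1.
split; first by rewrite unitmx_mul uQ ub2.
have E : (block_mx 1%:M 0 0 P' : 'M_(1 + m)) *m (block_mx d%:M 0 0 B : 'M_(1 + m, 1 + n))
    *m (block_mx 1%:M 0 0 Q' : 'M_(1 + n)) = block_mx d%:M 0 0 (P' *m B *m Q').
  rewrite !mulmx_block !mul1mx !mulmx1 !mul0mx !mulmx0 ?addr0 ?add0r.
  by congr block_mx; exact: mul0mx.
have hd' : forall i j, rdvd d ((P' *m B *m Q') i j).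
  by move=> i j; apply: (spanM_dvd hd); exact: spanM_mul.
have S := smith_block sD hd'; rewrite -E -eA in S.
by rewrite !mulmxA; move: S; rewrite !mulmxA.
Qed.
End EDR.


Lemma ord2_cases (i : 'I_2) : i = 0 \/ i = 1.
Proof. by case: i => [[|[|k]] hk]; [left; apply: val_inj|right; apply: val_inj|]. Qed.

Section Fwd.
Variable R : idomainType.

Lemma KC_of_edr : elementary_divisor_ring R -> KC R.
Proof.
move=> hE a b c [x [y [z hxyz]]].
have [P [Q [uP [uQ [sd0 sd1]]]]] := hE 2 2 (mx22 a b 0 c).
move: sd0 sd1; set D := P *m _ *m Q => sd0 sd1.
have D01 : D 0 1 = 0 by apply: sd0.
have D10 : D 1 0 = 0 by apply: sd0.
have D11 : rdvd (D 0 0) (D 1 1) by apply: (sd1 0 1 0 1).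
have hall i j : rdvd (D 0 0) (D i j).
  case: (ord2_cases i) => ->; case: (ord2_cases j) => ->; rewrite ?D01 ?D10 //;
    try exact: rdvd0; by exists 1; rewrite mul1r.
have hA i j : rdvd (D 0 0) (mx22 a b 0 c i j).
  apply: (spanM_dvd hall).
  have e : invmx P *m D *m invmx Q = mx22 a b 0 c.
    by rewrite /D !mulmxA mulmxK // mulVmx // mul1mx.
  by have := spanM_mul (invmx P) D (invmx Q) i j; rewrite e.
have h1 : rdvd (D 0 0) 1.
  rewrite -hxyz; apply: rdvdD; [apply: rdvdD|]; apply: rdvdM.
  - by have := hA 0 0; rewrite [mx22 a b 0 c _ _]mxE.
  - by have := hA 0 1; rewrite [mx22 a b 0 c _ _]mxE.
  - by have := hA 1 1; rewrite [mx22 a b 0 c _ _]mxE.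
case: h1 => k hk.
exists (P 0 0), (P 0 1), (k * Q 0 0), (k * Q 1 0).
rewrite hk /D !mul2E !mxE /=; ring.
Qed.
End Fwd.


Unset Implicit Arguments.

Theorem theorem2p13 (R : idomainType) (hB : bezout_domain R) :
  elementary_divisor_ring R <->
  (forall a1 a2 b1 b2 : R, rcoprime a1 a2 -> rcoprime b1 b2 ->
     exists r : R, exists alpha beta : R,
       b1 + r * b2 = alpha * beta /\
       rcoprime alpha beta /\ rcoprime a1 alpha /\ rcoprime a2 beta).
Proof.
split.
- move=> hE; exact: (KC_ZC hB (KC_of_edr hE)).
- move=> hZ; apply: (edr_of_KC hB); exact: (ZC_KC hB hZ).
Qed.
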